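(* Let $\alpha>0$, $\beta_m>\alpha$, $\tau=1/(\beta_m-\alpha)$ and $$\beta(t)=\alpha+\frac{1/\tau}{1+t/\tau}.$$ Let $S_0>0$, $I_0>0$ and let $(S(t),I(t),R(t))$ be the solution of $$\dot S=-\frac{\beta(t)SI}{S+I},\qquad \dot I=\frac{\beta(t)SI}{S+I}-\alpha I,\qquad \dot R=\alpha I$$ with $S(0)=S_0$, $I(0)=I_0$. Then for $t\ge 0$, $$S(t)=S_0\left(\frac{S_0+I_0}{S_0+I_0(1+t/\tau)}\right)^{1-\frac{S_0}{I_0}\alpha\tau}e^{-\alpha t},\qquad I(t)=I_0\left(1+\frac t\tau\right)\left(\frac{S_0+I_0}{S_0+I_0(1+t/\tau)}\right)^{1-\frac{S_0}{I_0}\alpha\tau}e^{-\alpha t},$$ and the maximum of $I(t)$ occurs at $$t_{\mathrm{peak}}=\tau\left(\sqrt{\frac{S_0}{I_0\alpha\tau}}-1\right).$$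
   Context: Modified SIR epidemiological model with constant recovery rate $\alpha$ and time-dependent transmission rate $\beta(t)$, here monotonically decreasing from $\beta_m$ at $t=0$ towards $\alpha$. *)

(* Defs.v *)
From Stdlib Require Export Reals.
Open Scope R_scope.

Definition beta_t (alpha tau t : R) : R := alpha + (1 / tau) / (1 + t / tau).

Definition right_cont_at0 (f : R -> R) : Prop :=
  forall eps, 0 < eps -> exists delta, 0 < delta /\
    forall t, 0 <= t < delta -> Rabs (f t - f 0) < eps.

(* Main.v *)
Require Import Defs.
From Stdlib Require Import Reals Lra Classical.
From Coquelicot Require Import Coquelicot.
Open Scope R_scope.

Lemma d_ext f x l l' : derivable_pt_lim f x l -> l = l' -> derivable_pt_lim f x l'.
Proof. intros H E; subst; exact H. Qed.

Lemma d_ln f x l : derivable_pt_lim f x l -> 0 < f x ->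
  derivable_pt_lim (fun t => ln (f t)) x (l / f x).
Proof.
  intros H Hp.
  assert (H2 := derivable_pt_lim_comp f ln x l (/ f x) H (derivable_pt_lim_ln _ Hp)).
  unfold comp in H2. replace (l / f x) with (/ f x * l) by (unfold Rdiv; ring). exact H2.
Qed.

Lemma d_plus f g x l1 l2 : derivable_pt_lim f x l1 -> derivable_pt_lim g x l2 ->
  derivable_pt_lim (fun t => f t + g t) x (l1 + l2).
Proof. intros H1 H2. exact (derivable_pt_lim_plus f g x l1 l2 H1 H2). Qed.

Lemma d_minus f g x l1 l2 : derivable_pt_lim f x l1 -> derivable_pt_lim g x l2 ->
  derivable_pt_lim (fun t => f t - g t) x (l1 - l2).
Proof. intros H1 H2. exact (derivable_pt_lim_minus f g x l1 l2 H1 H2). Qed.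

Lemma dpl_cont f x l : derivable_pt_lim f x l -> continuity_pt f x.
Proof. intros H; apply derivable_continuous_pt; exists l; exact H. Qed.

Lemma rc_plus f g : right_cont_at0 f -> right_cont_at0 g -> right_cont_at0 (fun t => f t + g t).
Proof.
  intros Hf Hg eps He.
  destruct (Hf (eps/2)) as [d1 [Hd1 H1]]; [lra|].
  destruct (Hg (eps/2)) as [d2 [Hd2 H2]]; [lra|].
  exists (Rmin d1 d2). split. apply Rmin_glb_lt; auto.
  intros t Ht.
  assert (t < d1) by (eapply Rlt_le_trans; [apply Ht|apply Rmin_l]).
  assert (t < d2) by (eapply Rlt_le_trans; [apply Ht|apply Rmin_r]).
  specialize (H1 t (conj (proj1 Ht) H)). specialize (H2 t (conj (proj1 Ht) H0)).
  replace (f t + g t - (f 0 + g 0)) with ((f t - f 0) + (g t - g 0)) by ring.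
  eapply Rle_lt_trans. apply Rabs_triang. lra.
Qed.

Lemma rc_minus f g : right_cont_at0 f -> right_cont_at0 g -> right_cont_at0 (fun t => f t - g t).
Proof.
  intros Hf Hg eps He.
  destruct (Hf (eps/2)) as [d1 [Hd1 H1]]; [lra|].
  destruct (Hg (eps/2)) as [d2 [Hd2 H2]]; [lra|].
  exists (Rmin d1 d2). split. apply Rmin_glb_lt; auto.
  intros t Ht.
  assert (t < d1) by (eapply Rlt_le_trans; [apply Ht|apply Rmin_l]).
  assert (t < d2) by (eapply Rlt_le_trans; [apply Ht|apply Rmin_r]).
  specialize (H1 t (conj (proj1 Ht) H)). specialize (H2 t (conj (proj1 Ht) H0)).
  replace (f t - g t - (f 0 - g 0)) with ((f t - f 0) + - (g t - g 0)) by ring.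
  eapply Rle_lt_trans. apply Rabs_triang. rewrite Rabs_Ropp. lra.
Qed.

Lemma rc_comp f h : right_cont_at0 f -> continuity_pt h (f 0) ->
  right_cont_at0 (fun t => h (f t)).
Proof.
  intros Hf Hh eps He.
  destruct (Hh eps He) as [a [Ha H]].
  destruct (Hf a Ha) as [d [Hd H2]].
  exists d. split; auto. intros t Ht.
  destruct (Req_dec (f t) (f 0)) as [E|E].
  - rewrite E. unfold Rminus. rewrite Rplus_opp_r, Rabs_R0. auto.
  - apply (H (f t)). split. split. exact I. auto.
    simpl. unfold R_dist. apply H2; auto.
Qed.

Lemma rc_cont f : continuity_pt f 0 -> right_cont_at0 f.
Proof.
  intros Hc.
  assert (Hid : right_cont_at0 (fun t => t)).
  { intros eps He. exists eps. split; auto. intros t Ht.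
    rewrite Rminus_0_r, Rabs_right; lra. }
  exact (rc_comp (fun t => t) f Hid Hc).
Qed.

Lemma rc_eq g t1 c : 0 < t1 -> right_cont_at0 g -> (forall s, 0 < s < t1 -> g s = c) -> g 0 = c.
Proof.
  intros Ht Hg Hs.
  destruct (Req_dec (g 0) c) as [E|E]; auto. exfalso.
  assert (He : 0 < Rabs (g 0 - c)) by (apply Rabs_pos_lt; lra).
  destruct (Hg _ He) as [d [Hd H]].
  set (s := Rmin (d/2) (t1/2)).
  assert (0 < s) by (apply Rmin_glb_lt; lra).
  assert (s <= d/2) by apply Rmin_l. assert (s <= t1/2) by apply Rmin_r.
  specialize (H s ltac:(lra)). rewrite (Hs s ltac:(lra)) in H.
  rewrite Rabs_minus_sym in H. lra.
Qed.

Lemma left_eq g T c : 0 < T -> continuity_pt g T -> (forall s, 0 < s < T -> g s = c) -> g T = c.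
Proof.
  intros Ht Hg Hs.
  destruct (Req_dec (g T) c) as [E|E]; auto. exfalso.
  assert (He : 0 < Rabs (g T - c)) by (apply Rabs_pos_lt; lra).
  destruct (Hg _ He) as [d [Hd H]].
  set (m := Rmin (d/2) (T/2)).
  assert (0 < m) by (apply Rmin_glb_lt; lra).
  assert (m <= d/2) by apply Rmin_l. assert (m <= T/2) by apply Rmin_r.
  assert (Hk : Rabs (g (T - m) - g T) < Rabs (g T - c)).
  { apply (H (T - m)). split. split. exact I. lra.
    simpl. unfold R_dist. rewrite Rabs_left; lra. }
  rewrite (Hs (T - m) ltac:(lra)) in Hk. rewrite Rabs_minus_sym in Hk. lra.
Qed.

Lemma constL g t1 : 0 < t1 -> right_cont_at0 g ->
  (forall s, 0 < s <= t1 -> derivable_pt_lim g s 0) -> g t1 = g 0.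
Proof.
  intros Ht Hg Hd. symmetry. apply (rc_eq g t1); auto.
  intros s Hs.
  destruct (MVT_cor2 g (fun _ => 0) s t1) as [c [Hc _]]. lra.
  intros c Hc. apply Hd. lra.
  lra.
Qed.

Lemma cont_pos f x : continuity_pt f x -> 0 < f x ->
  exists d, 0 < d /\ forall y, Rabs (y - x) < d -> 0 < f y.
Proof.
  intros Hc Hp. destruct (Hc _ Hp) as [d [Hd H]].
  exists d. split; auto. intros y Hy.
  destruct (Req_dec y x) as [E|E]. subst; auto.
  assert (H' : Rabs (f y - f x) < f x).
  { apply (H y). split. split. exact I. auto. simpl. unfold R_dist. auto. }
  apply Rabs_def2 in H'. lra.
Qed.

Lemma d_lna tau s : 0 < tau -> 0 <= s ->
  derivable_pt_lim (fun t => ln (1 + t / tau)) s ((1/tau) / (1 + s/tau)).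
Proof.
  intros Ht Hs. apply is_derive_Reals. auto_derive.
  - assert (0 <= s / tau) by (apply Rdiv_le_0_compat; lra). unfold Rdiv in *. lra.
  - unfold Rdiv. ring.
Qed.

Lemma step1 alpha tau S0 I0 (S I : R -> R) :
  0 < tau ->
  (forall t, 0 < t -> derivable_pt_lim S t (- (beta_t alpha tau t * S t * I t / (S t + I t)))) ->
  (forall t, 0 < t -> derivable_pt_lim I t (beta_t alpha tau t * S t * I t / (S t + I t) - alpha * I t)) ->
  right_cont_at0 S -> right_cont_at0 I -> S 0 = S0 -> I 0 = I0 -> 0 < S0 -> 0 < I0 ->
  forall t1, 0 < t1 -> (forall s, 0 <= s <= t1 -> 0 < S s /\ 0 < I s) ->
  ln (I t1) - ln (S t1) - ln (1 + t1/tau) = ln I0 - ln S0.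
Proof.
  intros Htau HdS HdI HcS HcI HS0 HI0 PS0 PI0 t1 Ht1 Hpos.
  set (g := fun t => ln (I t) - ln (S t) - ln (1 + t/tau)).
  assert (E : g t1 = g 0).
  { apply constL; auto.
    - unfold g. apply rc_minus. apply rc_minus.
      + apply rc_comp; auto. rewrite HI0. apply (dpl_cont _ _ _ (derivable_pt_lim_ln _ PI0)).
      + apply rc_comp; auto. rewrite HS0. apply (dpl_cont _ _ _ (derivable_pt_lim_ln _ PS0)).
      + apply rc_cont. eapply dpl_cont. apply d_lna; lra.
    - intros s Hs. destruct (Hpos s) as [PS PI]; [lra|].
      unfold g. eapply d_ext.
      apply d_minus. apply d_minus.
      apply d_ln. apply HdI; lra. auto.
      apply d_ln. apply HdS; lra. auto.
      apply d_lna; lra.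
      assert (0 < s / tau) by (apply Rdiv_lt_0_compat; lra).
      unfold beta_t. field. repeat split; try lra. }
  unfold g in E. rewrite E, HS0, HI0. unfold Rdiv. rewrite Rmult_0_l, Rplus_0_r, ln_1. ring.
Qed.

Lemma rel alpha tau S0 I0 (S I : R -> R) :
  0 < tau ->
  (forall t, 0 < t -> derivable_pt_lim S t (- (beta_t alpha tau t * S t * I t / (S t + I t)))) ->
  (forall t, 0 < t -> derivable_pt_lim I t (beta_t alpha tau t * S t * I t / (S t + I t) - alpha * I t)) ->
  right_cont_at0 S -> right_cont_at0 I -> S 0 = S0 -> I 0 = I0 -> 0 < S0 -> 0 < I0 ->
  forall t1, 0 < t1 -> (forall s, 0 <= s <= t1 -> 0 < S s /\ 0 < I s) ->
  I t1 = I0 / S0 * (1 + t1/tau) * S t1.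
Proof.
  intros Htau HdS HdI HcS HcI HS0 HI0 PS0 PI0 t1 Ht1 Hpos.
  assert (E := step1 alpha tau S0 I0 S I Htau HdS HdI HcS HcI HS0 HI0 PS0 PI0 t1 Ht1 Hpos).
  destruct (Hpos t1) as [PS PI]; [lra|].
  assert (Pa : 0 < 1 + t1/tau) by (assert (0 < t1 / tau) by (apply Rdiv_lt_0_compat; lra); lra).
  apply ln_inv; auto.
  apply Rmult_lt_0_compat; auto. apply Rmult_lt_0_compat; auto. apply Rdiv_lt_0_compat; auto.
  rewrite !ln_mult, ln_div; auto. lra.
  apply Rdiv_lt_0_compat; auto.
  apply Rmult_lt_0_compat; auto. apply Rdiv_lt_0_compat; auto.
Qed.

Lemma d_expl tau S0 I0 p alpha s : 0 < tau -> 0 <= s -> 0 < S0 -> 0 < I0 ->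
  derivable_pt_lim (fun t => p * ln (S0 + I0 * (1 + t / tau)) + alpha * t) s
    (p * (I0 / tau) / (S0 + I0 * (1 + s / tau)) + alpha).
Proof.
  intros Ht Hs H1 H2. apply is_derive_Reals.
  assert (0 <= s / tau) by (apply Rdiv_le_0_compat; lra).
  assert (0 <= I0 * (s / tau)) by (apply Rmult_le_pos; lra).
  auto_derive.
  - unfold Rdiv in *. nra.
  - unfold Rdiv. ring.
Qed.

Lemma step2 alpha tau S0 I0 (S I : R -> R) :
  0 < tau ->
  (forall t, 0 < t -> derivable_pt_lim S t (- (beta_t alpha tau t * S t * I t / (S t + I t)))) ->
  (forall t, 0 < t -> derivable_pt_lim I t (beta_t alpha tau t * S t * I t / (S t + I t) - alpha * I t)) ->
  right_cont_at0 S -> right_cont_at0 I -> S 0 = S0 -> I 0 = I0 -> 0 < S0 -> 0 < I0 ->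
  forall t1, 0 < t1 -> (forall s, 0 <= s <= t1 -> 0 < S s /\ 0 < I s) ->
  ln (S t1) + ((1 - S0 / I0 * alpha * tau) * ln (S0 + I0 * (1 + t1 / tau)) + alpha * t1)
  = ln S0 + (1 - S0 / I0 * alpha * tau) * ln (S0 + I0).
Proof.
  intros Htau HdS HdI HcS HcI HS0 HI0 PS0 PI0 t1 Ht1 Hpos.
  set (p := 1 - S0 / I0 * alpha * tau).
  set (g := fun t => ln (S t) + (p * ln (S0 + I0 * (1 + t / tau)) + alpha * t)).
  assert (E : g t1 = g 0).
  { apply constL; auto.
    - unfold g. apply rc_plus.
      + apply rc_comp; auto. rewrite HS0. apply (dpl_cont _ _ _ (derivable_pt_lim_ln _ PS0)).
      + apply rc_cont. eapply dpl_cont. apply d_expl; lra.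
    - intros s Hs. destruct (Hpos s) as [PS PI]; [lra|].
      assert (Hr := rel alpha tau S0 I0 S I Htau HdS HdI HcS HcI HS0 HI0 PS0 PI0 s
                 ltac:(lra) ltac:(intros; apply Hpos; lra)).
      unfold g. eapply d_ext.
      apply d_plus.
      apply d_ln. apply HdS; lra. auto.
      apply d_expl; lra.
      assert (0 < s / tau) by (apply Rdiv_lt_0_compat; lra).
      assert (0 < I0 * (s / tau)) by (apply Rmult_lt_0_compat; lra).
      assert (0 < I0 / S0 * (1 + s / tau)) by (apply Rmult_lt_0_compat; [apply Rdiv_lt_0_compat|]; lra).
      assert (0 < I0 / S0 * (1 + s / tau) * S s) by (apply Rmult_lt_0_compat; lra).
      rewrite Hr. unfold beta_t, p. field. repeat split; try lra.
      - nra.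
      - assert (0 < S s * (S0*tau+I0*(tau+s))) by (apply Rmult_lt_0_compat; nra). nra. }
  unfold g in E. rewrite E, HS0. unfold Rdiv. rewrite !Rmult_0_l, Rplus_0_r, Rmult_0_r, Rplus_0_r, Rmult_1_r.
  reflexivity.
Qed.

Definition fS alpha tau S0 I0 t := S0 * Rpower ((S0 + I0) / (S0 + I0 * (1 + t / tau))) (1 - S0 / I0 * alpha * tau) * exp (- alpha * t).
Definition fI alpha tau S0 I0 t := I0 * (1 + t / tau) * Rpower ((S0 + I0) / (S0 + I0 * (1 + t / tau))) (1 - S0 / I0 * alpha * tau) * exp (- alpha * t).

Lemma core alpha tau S0 I0 (S I : R -> R) :
  0 < tau ->
  (forall t, 0 < t -> derivable_pt_lim S t (- (beta_t alpha tau t * S t * I t / (S t + I t)))) ->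
  (forall t, 0 < t -> derivable_pt_lim I t (beta_t alpha tau t * S t * I t / (S t + I t) - alpha * I t)) ->
  right_cont_at0 S -> right_cont_at0 I -> S 0 = S0 -> I 0 = I0 -> 0 < S0 -> 0 < I0 ->
  forall t1, 0 <= t1 -> (forall s, 0 <= s <= t1 -> 0 < S s /\ 0 < I s) ->
  S t1 = fS alpha tau S0 I0 t1 /\ I t1 = fI alpha tau S0 I0 t1.
Proof.
  intros Htau HdS HdI HcS HcI HS0 HI0 PS0 PI0 t1 Ht1 Hpos.
  unfold fS, fI.
  set (p := 1 - S0 / I0 * alpha * tau).
  destruct (Req_dec t1 0) as [Z|Z].
  - subst t1. replace (0 / tau) with 0 by (field; lra).
    replace ((S0 + I0) / (S0 + I0 * (1 + 0))) with 1 by (field; lra).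
    unfold Rpower. rewrite ln_1, Rmult_0_r, Rmult_0_r, exp_0, HS0, HI0. split; ring.
  - assert (Pt : 0 < t1) by lra.
    assert (E := step2 alpha tau S0 I0 S I Htau HdS HdI HcS HcI HS0 HI0 PS0 PI0 t1 Pt Hpos).
    assert (Hr := rel alpha tau S0 I0 S I Htau HdS HdI HcS HcI HS0 HI0 PS0 PI0 t1 Pt Hpos).
    fold p in E.
    destruct (Hpos t1) as [PS PI]; [lra|].
    assert (0 < t1 / tau) by (apply Rdiv_lt_0_compat; lra).
    assert (0 < I0 * (1 + t1 / tau)) by (apply Rmult_lt_0_compat; lra).
    assert (HD : 0 < S0 + I0 * (1 + t1 / tau)) by lra.
    assert (HSf : S t1 = S0 * Rpower ((S0 + I0) / (S0 + I0 * (1 + t1 / tau))) p * exp (- alpha * t1)).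
    { rewrite <- (exp_ln (S t1) PS).
      assert (L : ln (S t1) = ln S0 + p * ln ((S0 + I0) / (S0 + I0 * (1 + t1 / tau))) + (- alpha * t1)).
      { rewrite ln_div by lra. lra. }
      rewrite L, !exp_plus, exp_ln by lra. unfold Rpower. reflexivity. }
    split; auto.
    rewrite Hr, HSf. field. lra.
Qed.

Lemma fS_cont alpha tau S0 I0 T : 0 < tau -> 0 < S0 -> 0 < I0 -> 0 <= T ->
  continuity_pt (fS alpha tau S0 I0) T.
Proof.
  intros Ht H1 H2 HT. apply continuity_pt_filterlim. apply (@ex_derive_continuous R_AbsRing R_NormedModule).
  unfold fS, Rpower.
  assert (0 <= T / tau) by (apply Rdiv_le_0_compat; lra).
  assert (0 <= I0 * (T / tau)) by (apply Rmult_le_pos; lra).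
  auto_derive. unfold Rdiv in *.
  assert (0 < S0 + I0 * (1 + T * / tau)) by nra.
  split; [lra|]. split; [|auto].
  apply Rmult_lt_0_compat. lra. apply Rinv_0_lt_compat. lra.
Qed.

Lemma fI_cont alpha tau S0 I0 T : 0 < tau -> 0 < S0 -> 0 < I0 -> 0 <= T ->
  continuity_pt (fI alpha tau S0 I0) T.
Proof.
  intros Ht H1 H2 HT. apply continuity_pt_filterlim. apply (@ex_derive_continuous R_AbsRing R_NormedModule).
  unfold fI, Rpower.
  assert (0 <= T / tau) by (apply Rdiv_le_0_compat; lra).
  assert (0 <= I0 * (T / tau)) by (apply Rmult_le_pos; lra).
  auto_derive. unfold Rdiv in *.
  assert (0 < S0 + I0 * (1 + T * / tau)) by nra.
  split; [lra|]. split; [|auto].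
  apply Rmult_lt_0_compat. lra. apply Rinv_0_lt_compat. lra.
Qed.

Lemma fS_pos alpha tau S0 I0 t : 0 < S0 -> 0 < fS alpha tau S0 I0 t.
Proof.
  intros H. unfold fS, Rpower. apply Rmult_lt_0_compat. apply Rmult_lt_0_compat; auto.
  apply exp_pos. apply exp_pos.
Qed.

Lemma fI_pos alpha tau S0 I0 t : 0 < tau -> 0 < I0 -> 0 <= t -> 0 < fI alpha tau S0 I0 t.
Proof.
  intros Ht H Hp. assert (0 <= t / tau) by (apply Rdiv_le_0_compat; lra).
  unfold fI, Rpower. apply Rmult_lt_0_compat. apply Rmult_lt_0_compat.
  apply Rmult_lt_0_compat; lra.
  apply exp_pos. apply exp_pos.
Qed.

Lemma allpos alpha tau S0 I0 (S I : R -> R) :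
  0 < tau ->
  (forall t, 0 < t -> derivable_pt_lim S t (- (beta_t alpha tau t * S t * I t / (S t + I t)))) ->
  (forall t, 0 < t -> derivable_pt_lim I t (beta_t alpha tau t * S t * I t / (S t + I t) - alpha * I t)) ->
  right_cont_at0 S -> right_cont_at0 I -> S 0 = S0 -> I 0 = I0 -> 0 < S0 -> 0 < I0 ->
  forall t, 0 <= t -> forall s, 0 <= s <= t -> 0 < S s /\ 0 < I s.
Proof.
  intros Htau HdS HdI HcS HcI HS0 HI0 PS0 PI0 t Ht.
  apply NNPP; intro Hn.
  set (E := fun x => 0 <= x /\ forall s, 0 <= s <= x -> 0 < S s /\ 0 < I s).
  assert (Hb : bound E).
  { exists t. intros x [Hx Hxs]. destruct (Rle_dec x t) as [|n]; auto. exfalso; apply Hn.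
    intros s Hs; apply Hxs; lra. }
  assert (He : exists x, E x).
  { exists 0. split. lra. intros s Hs. replace s with 0 by lra. rewrite HS0, HI0; lra. }
  destruct (completeness E Hb He) as [T [HTub HTlub]].
  assert (Ha : forall s, 0 <= s < T -> 0 < S s /\ 0 < I s).
  { intros s Hs. apply NNPP; intro Hns.
    assert (is_upper_bound E s).
    { intros x [Hx Hxs]. destruct (Rle_dec x s) as [|n]; auto. exfalso; apply Hns; apply Hxs; lra. }
    specialize (HTlub s H). lra. }
  assert (HT0 : 0 < T).
  { destruct (HcS S0 PS0) as [d1 [Hd1 H1]].
    destruct (HcI I0 PI0) as [d2 [Hd2 H2]].
    set (m := Rmin d1 d2 / 2).
    assert (0 < Rmin d1 d2) by (apply Rmin_glb_lt; auto).
    assert (Rmin d1 d2 <= d1) by apply Rmin_l. assert (Rmin d1 d2 <= d2) by apply Rmin_r.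
    assert (Em : E m).
    { split. unfold m; lra. intros s Hs.
      specialize (H1 s ltac:(unfold m in Hs; lra)). specialize (H2 s ltac:(unfold m in Hs; lra)).
      rewrite HS0 in H1. rewrite HI0 in H2.
      apply Rabs_def2 in H1. apply Rabs_def2 in H2. lra. }
    specialize (HTub m Em). unfold m in HTub. lra. }
  assert (Hf : forall s, 0 < s < T -> S s = fS alpha tau S0 I0 s /\ I s = fI alpha tau S0 I0 s).
  { intros s Hs. apply (core alpha tau S0 I0 S I); auto. lra. intros u Hu. apply Ha. lra. }
  assert (HST : S T = fS alpha tau S0 I0 T).
  { assert (G : (fun x => S x - fS alpha tau S0 I0 x) T = 0).
    { apply (left_eq (fun x => S x - fS alpha tau S0 I0 x) T 0); auto.
      - apply (continuity_pt_minus S (fS alpha tau S0 I0) T).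
        eapply dpl_cont. apply HdS; auto.
        apply fS_cont; lra.
      - intros s Hs. rewrite (proj1 (Hf s Hs)). ring. }
    simpl in G. lra. }
  assert (HIT : I T = fI alpha tau S0 I0 T).
  { assert (G : (fun x => I x - fI alpha tau S0 I0 x) T = 0).
    { apply (left_eq (fun x => I x - fI alpha tau S0 I0 x) T 0); auto.
      - apply (continuity_pt_minus I (fI alpha tau S0 I0) T).
        eapply dpl_cont. apply HdI; auto.
        apply fI_cont; lra.
      - intros s Hs. rewrite (proj2 (Hf s Hs)). ring. }
    simpl in G. lra. }
  assert (PST : 0 < S T) by (rewrite HST; apply fS_pos; auto).
  assert (PIT : 0 < I T) by (rewrite HIT; apply fI_pos; lra).
  destruct (cont_pos S T) as [d1 [Hd1 H1]]; auto. eapply dpl_cont; apply HdS; auto.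
  destruct (cont_pos I T) as [d2 [Hd2 H2]]; auto. eapply dpl_cont; apply HdI; auto.
  set (m := Rmin d1 d2).
  assert (0 < m) by (apply Rmin_glb_lt; auto).
  assert (m <= d1) by apply Rmin_l. assert (m <= d2) by apply Rmin_r.
  assert (Em : E (T + m/2)).
  { split. lra. intros s Hs.
    destruct (Rlt_dec s T) as [L|L]. apply Ha; lra.
    split. apply H1. rewrite Rabs_right; lra. apply H2. rewrite Rabs_right; lra. }
  specialize (HTub _ Em). lra.
Qed.

Definition Phi alpha tau S0 I0 t := ln (1 + t / tau) +
  (1 - S0 / I0 * alpha * tau) * ln ((S0 + I0) / (S0 + I0 * (1 + t / tau))) + (- alpha * t).

Definition dPhi alpha tau S0 I0 c := (S0 - alpha * tau * I0 * ((1 + c / tau) * (1 + c / tau))) /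
   (tau * (1 + c / tau) * (S0 + I0 * (1 + c / tau))).

Lemma fI_Phi alpha tau S0 I0 t : 0 < tau -> 0 <= t ->
  fI alpha tau S0 I0 t = I0 * exp (Phi alpha tau S0 I0 t).
Proof.
  intros Ht H. assert (0 <= t / tau) by (apply Rdiv_le_0_compat; lra).
  unfold fI, Phi, Rpower. rewrite !exp_plus, exp_ln by lra. ring.
Qed.

Lemma dPhi_ok alpha tau S0 I0 c : 0 < tau -> 0 < S0 -> 0 < I0 -> 0 <= c ->
  derivable_pt_lim (Phi alpha tau S0 I0) c (dPhi alpha tau S0 I0 c).
Proof.
  intros Ht H1 H2 Hc. apply is_derive_Reals. unfold Phi, dPhi.
  assert (0 <= c / tau) by (apply Rdiv_le_0_compat; lra).
  assert (0 <= I0 * (c / tau)) by (apply Rmult_le_pos; lra).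
  auto_derive.
  - unfold Rdiv in *. assert (0 < S0 + I0 * (1 + c * / tau)) by nra.
    split. lra. split. lra. split.
    apply Rmult_lt_0_compat. lra. apply Rinv_0_lt_compat. lra. auto.
  - unfold Rdiv in *. assert (0 < S0 + I0 * (1 + c * / tau)) by nra.
    field. repeat split; try lra. all: nra.
Qed.

Lemma peak alpha tau S0 I0 t : 0 < alpha -> 0 < tau -> 0 < S0 -> 0 < I0 ->
  0 <= tau * (sqrt (S0 / (I0 * alpha * tau)) - 1) -> 0 <= t ->
  fI alpha tau S0 I0 t <= fI alpha tau S0 I0 (tau * (sqrt (S0 / (I0 * alpha * tau)) - 1)).
Proof.
  intros Ha Ht H1 H2 Hp Hts.
  set (A := sqrt (S0 / (I0 * alpha * tau))) in *.
  set (tp := tau * (A - 1)) in *.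
  assert (HX : 0 < S0 / (I0 * alpha * tau)).
  { apply Rdiv_lt_0_compat; auto. apply Rmult_lt_0_compat; auto. apply Rmult_lt_0_compat; auto. }
  assert (HAA : A * A = S0 / (I0 * alpha * tau)) by (apply sqrt_sqrt; lra).
  assert (HA0 : 0 <= A) by apply sqrt_pos.
  assert (Hatp : 1 + tp / tau = A) by (unfold tp; field; lra).
  assert (Key : alpha * tau * I0 * (A * A) = S0) by (rewrite HAA; field; lra).
  assert (Hsgn : forall c, 0 <= c -> (c < tp -> 0 < dPhi alpha tau S0 I0 c) /\
                                   (tp < c -> dPhi alpha tau S0 I0 c < 0)).
  { intros c Hc. unfold dPhi.
    assert (0 <= c / tau) by (apply Rdiv_le_0_compat; lra).
    assert (Hden : 0 < tau * (1 + c / tau) * (S0 + I0 * (1 + c / tau))).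
    { apply Rmult_lt_0_compat. apply Rmult_lt_0_compat; lra. nra. }
    assert (Hq : 0 < alpha * tau * I0) by (apply Rmult_lt_0_compat; auto; apply Rmult_lt_0_compat; auto).
    split; intro Hlt.
    - assert (1 + c / tau < A).
      { rewrite <- Hatp. apply Rplus_lt_compat_l. unfold Rdiv. apply Rmult_lt_compat_r.
        apply Rinv_0_lt_compat; auto. auto. }
      apply Rdiv_lt_0_compat; auto.
      assert ((1 + c / tau) * (1 + c / tau) < A * A) by nra.
      nra.
    - assert (A < 1 + c / tau).
      { rewrite <- Hatp. apply Rplus_lt_compat_l. unfold Rdiv. apply Rmult_lt_compat_r.
        apply Rinv_0_lt_compat; auto. auto. }
      assert (A * A < (1 + c / tau) * (1 + c / tau)) by nra.
      unfold Rdiv. apply Rmult_neg_pos. nra. apply Rinv_0_lt_compat; auto. }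
  rewrite !fI_Phi by lra.
  apply Rmult_le_compat_l. lra.
  assert (Phi alpha tau S0 I0 t <= Phi alpha tau S0 I0 tp).
  { destruct (Rtotal_order t tp) as [L|[L|L]].
    - destruct (MVT_cor2 (Phi alpha tau S0 I0) (dPhi alpha tau S0 I0) t tp L) as [c [Hc Hc2]].
      intros c Hc. apply dPhi_ok; lra.
      assert (0 < dPhi alpha tau S0 I0 c) by (apply (Hsgn c); lra). nra.
    - rewrite L; lra.
    - destruct (MVT_cor2 (Phi alpha tau S0 I0) (dPhi alpha tau S0 I0) tp t L) as [c [Hc Hc2]].
      intros c Hc. apply dPhi_ok; lra.
      assert (dPhi alpha tau S0 I0 c < 0) by (apply (Hsgn c); lra). nra. }
  destruct H; [left; apply exp_increasing; auto | right; rewrite H; auto].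
Qed.
Theorem mainTheorem5 (alpha beta_m S0 I0 : R) (S I Rc : R -> R) :
  0 < alpha -> alpha < beta_m -> 0 < S0 -> 0 < I0 ->
  let tau := 1 / (beta_m - alpha) in
  (* (S, I, Rc) solves the ODE system for t > 0 *)
  (forall t, 0 < t ->
     derivable_pt_lim S t (- (beta_t alpha tau t * S t * I t / (S t + I t)))) ->
  (forall t, 0 < t ->
     derivable_pt_lim I t (beta_t alpha tau t * S t * I t / (S t + I t) - alpha * I t)) ->
  (forall t, 0 < t -> derivable_pt_lim Rc t (alpha * I t)) ->
  (* continuity at the initial time and initial conditions *)
  right_cont_at0 S -> right_cont_at0 I -> right_cont_at0 Rc ->
  S 0 = S0 -> I 0 = I0 ->
  let p := 1 - S0 / I0 * alpha * tau in
  let tpeak := tau * (sqrt (S0 / (I0 * alpha * tau)) - 1) in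
  (forall t, 0 <= t ->
     S t = S0 * Rpower ((S0 + I0) / (S0 + I0 * (1 + t / tau))) p * exp (- alpha * t) /\
     I t = I0 * (1 + t / tau)
             * Rpower ((S0 + I0) / (S0 + I0 * (1 + t / tau))) p * exp (- alpha * t)) /\
  (0 <= tpeak -> forall t, 0 <= t -> I t <= I tpeak).
Proof.
  intros Ha Hb HS HI tau HdS HdI HdR HcS HcI HcR HS0 HI0 p tpeak.
  assert (Htau : 0 < tau) by (unfold tau; apply Rdiv_lt_0_compat; lra).
  assert (F : forall t, 0 <= t -> S t = fS alpha tau S0 I0 t /\ I t = fI alpha tau S0 I0 t).
  { intros t Ht. apply (core alpha tau S0 I0 S I); auto.
    apply (allpos alpha tau S0 I0 S I); auto. }
  split.
  - intros t Ht. exact (F t Ht).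
  - intros Hp t Ht. rewrite (proj2 (F t Ht)), (proj2 (F tpeak Hp)).
    apply peak; auto.
Qed.
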